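(* Let $(D,\mathrm{left},\mathrm{right})$ be an interval poset, and let $\le$ be the partial order on $\max(D)$ given by $a\le b$ iff $a=\mathrm{left}(z)$ and $b=\mathrm{right}(z)$ for some $z\in D$. Let $\mathbf{I}(\max(D),\le)$ be the set of closed intervals $[a,b]=\{p\in\max(D): a\le p\le b\}$ with $a\le b$, ordered by reverse inclusion. Then $$\phi:D\to\mathbf{I}(\max(D),\le),\qquad x\mapsto[\mathrm{left}(x),\mathrm{right}(x)]$$ is an order isomorphism.
   Context: For a poset $(D,\sqsubseteq)$, $\max(D)$ is its set of maximal elements and $x\sqcap y$ denotes the infimum of $\{x,y\}$. An interval poset is a poset $D$ with two functions $\mathrm{left},\mathrm{right}:D\to\max(D)$ such that (only the infima named here are assumed to exist): (i) for all $x\in D$, $x=\mathrm{left}(x)\sqcap\mathrm{right}(x)$; (ii) for all $x,y\in D$, if $\mathrm{right}(x)=\mathrm{left}(y)$ then $x\sqcap y$ exists and $\mathrm{left}(x\sqcap y)=\mathrm{left}(x)$, $\mathrm{right}(x\sqcap y)=\mathrm{right}(y)$; (iii) for each $x\in D$ and each $p\in\max(D)$ with $x\sqsubseteq p$, the infima $\mathrm{left}(x)\sqcap p$ and $p\sqcap\mathrm{right}(x)$ exist and $\mathrm{left}(\mathrm{left}(x)\sqcap p)=\mathrm{left}(x)$, $\mathrm{right}(\mathrm{left}(x)\sqcap p)=p$, $\mathrm{left}(p\sqcap\mathrm{right}(x))=p$, $\mathrm{right}(p\sqcap\mathrm{right}(x))=\mathrm{right}(x)$. The relation $\le$ is a partial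 order on $\max(D)$. *)

(* Defs.v *)
Definition is_partial_order {D : Type} (le : D -> D -> Prop) : Prop :=
  (forall x, le x x) /\
  (forall x y, le x y -> le y x -> x = y) /\
  (forall x y z, le x y -> le y z -> le x z).

Definition is_max {D : Type} (le : D -> D -> Prop) (p : D) : Prop :=
  forall q, le p q -> q = p.

(** [z] is the infimum of [{x, y}] (so "x ⊓ y exists and equals z"). *)
Definition is_inf {D : Type} (le : D -> D -> Prop) (x y z : D) : Prop :=
  le z x /\ le z y /\ (forall w, le w x -> le w y -> le w z).

Record interval_poset {D : Type} (le : D -> D -> Prop) (left right : D -> D)
  : Prop := {
  ip_order : is_partial_order le;
  ip_left_max : forall x, is_max le (left x);
  ip_right_max : forall x, is_max le (right x);
  ip_i : forall x, is_inf le (left x) (right x) x;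
  ip_ii : forall x y, right x = left y ->
    exists z, is_inf le x y z /\ left z = left x /\ right z = right y;
  ip_iii : forall x p, is_max le p -> le x p ->
    (exists z, is_inf le (left x) p z /\ left z = left x /\ right z = p) /\
    (exists w, is_inf le p (right x) w /\ left w = p /\ right w = right x)
}.

Definition mle {D : Type} (left right : D -> D) (a b : D) : Prop :=
  exists z, a = left z /\ b = right z.

Definition closed_interval {D : Type} (le : D -> D -> Prop) (left right : D -> D)
  (a b : D) : D -> Prop :=
  fun p => is_max le p /\ mle left right a p /\ mle left right p b.

Definition set_eq {D : Type} (S T : D -> Prop) : Prop := forall p, S p <-> T p.
Definition set_sub {D : Type} (S T : D -> Prop) : Prop := forall p, S p -> T p.

Definition in_I {D : Type} (le : D -> D -> Prop) (left right : D -> D)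
  (S : D -> Prop) : Prop :=
  exists a b, is_max le a /\ is_max le b /\ mle left right a b /\
    set_eq S (closed_interval le left right a b).

Definition phi {D : Type} (le : D -> D -> Prop) (left right : D -> D)
  (x : D) : D -> Prop :=
  closed_interval le left right (left x) (right x).

(* Main.v *)
Require Import Defs.

Lemma max_left {D : Type} (le : D -> D -> Prop) (left right : D -> D)
  (HD : interval_poset le left right) p : is_max le p -> left p = p /\ right p = p.
Proof.
  intros Hp. destruct (ip_i _ _ _ HD p) as [H1 [H2 _]]. split; apply Hp; assumption.
Qed.

Lemma lr_inj {D : Type} (le : D -> D -> Prop) (left right : D -> D)
  (HD : interval_poset le left right) a b :
  left a = left b -> right a = right b -> a = b.
Proof.
  intros El Er. destruct (ip_order _ _ _ HD) as [_ [Anti _]].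
  destruct (ip_i _ _ _ HD a) as [A1 [A2 A3]].
  destruct (ip_i _ _ _ HD b) as [B1 [B2 B3]].
  apply Anti.
  - apply B3; [rewrite <- El | rewrite <- Er]; assumption.
  - apply A3; [rewrite El | rewrite Er]; assumption.
Qed.

Lemma mle_trans {D : Type} (le : D -> D -> Prop) (left right : D -> D)
  (HD : interval_poset le left right) a b c :
  mle left right a b -> mle left right b c -> mle left right a c.
Proof.
  intros [z1 [E1 E2]] [z2 [E3 E4]]. subst.
  destruct (ip_ii _ _ _ HD z1 z2 E3) as [z [_ [L R]]].
  exists z. split; congruence.
Qed.

Lemma mle_refl {D : Type} (le : D -> D -> Prop) (left right : D -> D)
  (HD : interval_poset le left right) p : is_max le p -> mle left right p p.
Proof.
  intros Hp. destruct (max_left _ _ _ HD p Hp) as [L R].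
  exists p. split; congruence.
Qed.

Lemma le_mle {D : Type} (le : D -> D -> Prop) (left right : D -> D)
  (HD : interval_poset le left right) x y : le x y ->
  mle left right (left x) (left y) /\ mle left right (right y) (right x).
Proof.
  intros Hxy. destruct (ip_order _ _ _ HD) as [_ [_ Tr]].
  destruct (ip_i _ _ _ HD y) as [Y1 [Y2 _]].
  split.
  - destruct (ip_iii _ _ _ HD x (left y) (ip_left_max _ _ _ HD y) (Tr _ _ _ Hxy Y1))
      as [[z [_ [L R]]] _].
    exists z. split; congruence.
  - destruct (ip_iii _ _ _ HD x (right y) (ip_right_max _ _ _ HD y) (Tr _ _ _ Hxy Y2))
      as [_ [w [_ [L R]]]].
    exists w. split; congruence.
Qed.

Lemma below_mid {D : Type} (le : D -> D -> Prop) (left right : D -> D)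
  (HD : interval_poset le left right) x q :
  mle left right (left x) q -> mle left right q (right x) -> le x q.
Proof.
  intros [z [E1 E2]] [z' [E3 E4]].
  destruct (ip_order _ _ _ HD) as [_ [_ Tr]].
  assert (Hr : right z = left z') by congruence.
  destruct (ip_ii _ _ _ HD z z' Hr) as [w [[W1 [W2 _]] [L R]]].
  assert (w = x) by (apply (lr_inj _ _ _ HD); congruence).
  subst w.
  destruct (ip_i _ _ _ HD z) as [_ [Z2 _]].
  rewrite E2. exact (Tr _ _ _ W1 Z2).
Qed.

Theorem mainTheorem8 (D : Type) (le : D -> D -> Prop) (left right : D -> D)
  (HD : interval_poset le left right) :
  (forall x, in_I le left right (phi le left right x)) /\
  (forall x y, le x y <-> set_sub (phi le left right y) (phi le left right x)) /\
  (forall x y, set_eq (phi le left right x) (phi le left right y) -> x = y) /\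
  (forall S, in_I le left right S ->
     exists x, set_eq (phi le left right x) S).
Proof.
  assert (P2 : forall x y, le x y <-> set_sub (phi le left right y) (phi le left right x)).
  { intros x y. split.
    - intros Hxy p [Hp [M1 M2]].
      destruct (le_mle _ _ _ HD x y Hxy) as [A B].
      split; [exact Hp| split].
      + exact (mle_trans _ _ _ HD _ _ _ A M1).
      + exact (mle_trans _ _ _ HD _ _ _ M2 B).
    - intros Hs.
      destruct (ip_order _ _ _ HD) as [_ [_ Tr]].
      destruct (ip_i _ _ _ HD y) as [_ [_ Y3]].
      assert (Hl : phi le left right y (left y)).
      { split; [apply (ip_left_max _ _ _ HD)|split].
        - apply (mle_refl _ _ _ HD), (ip_left_max _ _ _ HD).
        - exists y; split; reflexivity. }
      assert (Hr : phi le left right y (right y)).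
      { split; [apply (ip_right_max _ _ _ HD)|split].
        - exists y; split; reflexivity.
        - apply (mle_refl _ _ _ HD), (ip_right_max _ _ _ HD). }
      destruct (Hs _ Hl) as [_ [L1 L2]].
      destruct (Hs _ Hr) as [_ [R1 R2]].
      apply Y3; apply (below_mid _ _ _ HD); assumption. }
  split; [|split; [exact P2|split]].
  - intros x. exists (left x), (right x).
    split; [apply (ip_left_max _ _ _ HD)|split; [apply (ip_right_max _ _ _ HD)|split]].
    + exists x; split; reflexivity.
    + intros p; split; auto.
  - intros x y H. destruct (ip_order _ _ _ HD) as [_ [Anti _]].
    apply Anti; apply P2; intros p Hp; apply H; assumption.
  - intros S [a [b [Ha [Hb [[z [E1 E2]] Heq]]]]].
    exists z. intros p. unfold phi. rewrite <- E1, <- E2.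
    split; intros H; apply Heq; assumption.
Qed.
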